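(* Let $g(x)=\frac{\sin\log x}{\log x}$ for $0<x<1$ and $g(0)=g(1)=0$. If $\tfrac12<\sigma<1$, then $$\lim_{n\to\infty}\frac{S_{n,\sigma}(g)}{n^{2(1-\sigma)}}=\frac{1}{2(1-\sigma)}\arctan\Big(\frac{1}{1-\sigma}\Big),$$ and more precisely $$\frac{S_{n,\sigma}(g)}{n^{2(1-\sigma)}}=\frac{1}{2(1-\sigma)}\arctan\Big(\frac{1}{1-\sigma}\Big)+O_\sigma\Big(\frac{1}{n^{2(1-\sigma)/3}}\Big).$$
   Context: $S_{n,\sigma}(f)=\sum_{1\le k\le\ell\le n}\frac{1}{(k\ell)^\sigma}f\big(\frac k\ell\big)$. *)

(* Defs.v *)
From Stdlib Require Import Reals.
From Coquelicot Require Import Coquelicot.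
Open Scope R_scope.

(* g(x) = sin(log x)/log x for 0 < x < 1, and g(x) = 0 otherwise
   (in particular g(0) = g(1) = 0; only values on (0,1] are ever used). *)
Definition g (x : R) : R :=
  if Rlt_dec 0 x then (if Rlt_dec x 1 then sin (ln x) / ln x else 0) else 0.

Definition S_sum (n : nat) (sigma : R) (f : R -> R) : R :=
  sum_n_m (fun l : nat =>
    sum_n_m (fun k : nat =>
      Rpower (INR k * INR l) (- sigma) * f (INR k / INR l)) 1 l) 1 n.

(* Main.v *)
From Stdlib Require Import Reals.
From Stdlib Require Import Lra Lia Arith.
From Coquelicot Require Import Coquelicot.
Require Import Defs.
Open Scope R_scope.
Lemma expm1 (c y : R) : 0 < y -> exp ((c-1)*ln y) = exp (c*ln y) / y.
Proof. intros. replace ((c-1)*ln y) with (c*ln y + - ln y) by ring.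
rewrite exp_plus, exp_Ropp, exp_ln; auto. Qed.
Lemma exp_le' x y : x <= y -> exp x <= exp y.
Proof. intros [H|H]. left; apply exp_increasing; auto. subst; lra. Qed.

Definition fF (sg s ph x : R) := exp (-sg * ln x) * cos (s * ln x - ph).
Definition PF (sg s ph x : R) := exp ((1-sg) * ln x) *
  ((1-sg) * cos (s * ln x - ph) + s * sin (s * ln x - ph)) / ((1-sg)^2 + s^2).

Lemma dPF sg s ph x : sg < 1 -> 0 < x -> is_derive (PF sg s ph) x (fF sg s ph x).
Proof.
intros Hs Hx. unfold PF, fF. auto_derive.
- intuition lra.
- replace (-sg) with ((1-sg)-1) by ring. rewrite expm1; auto.
  assert (0 < (1-sg)^2 + s^2) by nra. unfold Rminus. field. lra.
Qed.
Definition dfF (sg s ph x : R) := exp ((-sg-1) * ln x) * (-sg * cos (s * ln x - ph) - s * sin (s * ln x - ph)).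
Lemma dfF_ok sg s ph x : 0 < x -> is_derive (fF sg s ph) x (dfF sg s ph x).
Proof.
intros Hx. unfold fF, dfF. auto_derive.
- intuition lra.
- rewrite expm1; auto. unfold Rminus. field. lra.
Qed.

Lemma incr sg s ph x : 0 < sg < 1 -> 0 <= s <= 1 -> 1 < x ->
  Rabs (fF sg s ph x - (PF sg s ph x - PF sg s ph (x-1))) <= 2 * exp ((-sg-1) * ln (x-1)).
Proof.
intros Hs Hs' Hx.
destruct (MVT_cor2 (PF sg s ph) (fF sg s ph) (x-1) x) as [xi [H1 H2]]; [lra| |].
{ intros c Hc. apply is_derive_Reals. apply dPF; lra. }
destruct (MVT_cor2 (fF sg s ph) (dfF sg s ph) xi x) as [eta [H3 H4]]; [lra| |].
{ intros c Hc. apply is_derive_Reals. apply dfF_ok; lra. }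
replace (x - (x-1)) with 1 in H1 by ring.
rewrite H1. rewrite Rmult_1_r. rewrite H3.
assert (Hd : Rabs (dfF sg s ph eta) <= 2 * exp ((-sg-1) * ln (x-1))).
{ unfold dfF. rewrite Rabs_mult. rewrite (Rabs_right (exp _)) by (left; apply exp_pos).
  assert (E1 : exp ((-sg-1) * ln eta) <= exp ((-sg-1) * ln (x-1))).
  { apply exp_le'. assert (ln (x-1) <= ln eta) by (apply ln_le; lra). nra. }
  assert (E2 : Rabs (-sg * cos (s * ln eta - ph) - s * sin (s * ln eta - ph)) <= 2).
  { pose proof (COS_bound (s * ln eta - ph)). pose proof (SIN_bound (s * ln eta - ph)).
    apply Rabs_le. split; nra. }
  pose proof (exp_pos ((-sg-1) * ln eta)). pose proof (Rabs_pos (-sg * cos (s * ln eta - ph) - s * sin (s * ln eta - ph))).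
  nra. }
rewrite Rabs_mult. pose proof (Rabs_pos (dfF sg s ph eta)).
rewrite (Rabs_right (x - xi)) by lra.
pose proof (exp_pos ((-sg-1) * ln (x-1))). nra.
Qed.
Lemma Pbnd sg s ph x : 0 < sg < 1 -> 0 <= s <= 1 ->
  Rabs (PF sg s ph x) <= exp ((1-sg) * ln x) * ((2-sg) / (1-sg)^2).
Proof.
intros Hs Hs'. unfold PF.
set (Y := exp ((1-sg) * ln x)). set (c := cos (s * ln x - ph)). set (si := sin (s * ln x - ph)).
assert (HY : 0 < Y) by apply exp_pos.
assert (Hc : -1 <= c <= 1) by apply COS_bound.
assert (Hsi : -1 <= si <= 1) by apply SIN_bound.
assert (Hd : (1-sg)^2 <= (1-sg)^2 + s^2) by nra.
assert (Ha : 0 < (1-sg)^2) by nra.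
unfold Rdiv. rewrite !Rabs_mult. rewrite (Rabs_right Y) by lra.
rewrite (Rabs_right (/ _)) by (left; apply Rinv_0_lt_compat; lra).
assert (HX : Rabs ((1 - sg) * c + s * si) <= 2 - sg) by (apply Rabs_le; split; nra).
assert (Hi : / ((1-sg)^2 + s^2) <= / (1-sg)^2) by (apply Rinv_le_contravar; lra).
assert (0 < / ((1-sg)^2 + s^2)) by (apply Rinv_0_lt_compat; lra).
pose proof (Rabs_pos ((1 - sg) * c + s * si)).
rewrite Rmult_assoc. apply Rmult_le_compat_l; [lra|].
apply Rmult_le_compat; lra.
Qed.

Definition CF sg s ph n := sum_n_m (fun k => fF sg s ph (INR k)) 1 n.
Definition EF sg s ph n := CF sg s ph n - PF sg s ph (INR n).

Lemma EF1 sg s ph : 0 < sg < 1 -> 0 <= s <= 1 ->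
  Rabs (EF sg s ph 1) <= 1 + (2-sg)/(1-sg)^2.
Proof.
intros Hs Hs'. unfold EF, CF. rewrite sum_n_n.
pose proof (Pbnd sg s ph (INR 1) Hs Hs').
simpl INR in *. rewrite ln_1 in *. rewrite Rmult_0_r, exp_0 in H.
unfold fF. rewrite ln_1, Rmult_0_r, exp_0, Rmult_1_l.
pose proof (COS_bound (s * 0 - ph)).
eapply Rle_trans. apply Rabs_triang. rewrite Rabs_Ropp.
assert (Rabs (cos (s*0-ph)) <= 1) by (apply Rabs_le; lra). lra.
Qed.
Lemma tele p x : 0 < p -> 1 < x ->
  exp ((-p-1) * ln x) <= (exp (-p * ln (x-1)) - exp (-p * ln x)) / p.
Proof.
intros Hp Hx.
destruct (MVT_cor2 (fun y => exp (-p * ln y)) (fun y => -p * exp ((-p-1) * ln y)) (x-1) x)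
  as [c [Hc1 Hc2]]; [lra| |].
- intros c Hc. apply is_derive_Reals. 
  assert (0 < c) by lra. auto_derive; [auto|]. rewrite expm1; auto. field. lra.
- simpl in Hc1. replace (x - (x-1)) with 1 in Hc1 by ring.
  assert (HB : exp ((-p-1) * ln x) <= exp ((-p-1) * ln c)).
  { apply exp_le'. assert (ln c <= ln x) by (apply ln_le; lra). nra. }
  apply Rle_trans with (exp ((-p-1) * ln c)); auto.
  right. apply Rmult_eq_reg_l with p; [|lra]. field_simplify; [|lra]. lra.
Qed.

Lemma EFstep sg s ph n : (1 <= n)%nat ->
  EF sg s ph (S n) = EF sg s ph n +
   (fF sg s ph (INR n + 1) - (PF sg s ph (INR n + 1) - PF sg s ph (INR n + 1 - 1))).
Proof.
intros Hn. unfold EF, CF. rewrite sum_n_Sm by lia. rewrite S_INR.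
replace (INR n + 1 - 1) with (INR n) by ring. unfold plus; simpl. ring.
Qed.

Lemma EFinv sg s ph m : 0 < sg < 1 -> 0 <= s <= 1 ->
  Rabs (EF sg s ph (S (S m))) + (2/sg) * exp (-sg * ln (INR (S m)))
   <= 1 + (2-sg)/(1-sg)^2 + 2 + 2/sg.
Proof.
intros Hs Hs'. induction m.
- rewrite EFstep by lia. pose proof (EF1 sg s ph Hs Hs').
  pose proof (incr sg s ph (INR 1 + 1) Hs Hs').
  simpl INR in *. replace (1+1-1) with 1 in * by ring. rewrite ln_1 in *.
  rewrite Rmult_0_r, exp_0 in *.
  eapply Rle_trans. apply Rplus_le_compat_r. apply Rabs_triang.
  assert (2/sg*1 = 2/sg) by ring. specialize (H0 ltac:(lra)). lra.
- rewrite EFstep by lia.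
  pose proof (incr sg s ph (INR (S (S m)) + 1) Hs Hs').
  replace (INR (S (S m)) + 1 - 1) with (INR (S (S m))) in * by ring.
  assert (H1 : 1 < INR (S (S m))) by (rewrite !S_INR; pose proof (pos_INR m); lra).
  specialize (H ltac:(lra)).
  pose proof (tele sg (INR (S (S m))) (proj1 Hs) H1).
  replace (INR (S (S m)) - 1) with (INR (S m)) in H0 by (rewrite (S_INR (S m)); ring).
  eapply Rle_trans. apply Rplus_le_compat_r. apply Rabs_triang.
  assert (2 * exp ((- sg - 1) * ln (INR (S (S m)))) <=
     2/sg * (exp (- sg * ln (INR (S m))) - exp (- sg * ln (INR (S (S m)))))).
  { unfold Rdiv in *. nra. }
  lra.
Qed.

Lemma EFbnd sg s ph n : 0 < sg < 1 -> 0 <= s <= 1 -> (1 <= n)%nat ->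
  Rabs (EF sg s ph n) <= 1 + (2-sg)/(1-sg)^2 + 2 + 2/sg.
Proof.
intros Hs Hs' Hn. 
assert (0 < 2/sg) by (unfold Rdiv; apply Rmult_lt_0_compat; [lra|apply Rinv_0_lt_compat; lra]).
destruct n as [|[|m]]; [lia| |].
- pose proof (EF1 sg s ph Hs Hs'). lra.
- pose proof (EFinv sg s ph m Hs Hs').
  pose proof (exp_pos (-sg * ln (INR (S m)))). nra.
Qed.

Definition hh (k l : nat) (s : R) : R :=
  if Nat.ltb k l then cos (s * ln (INR k / INR l)) else 0.
Definition Tn (n : nat) (sg s : R) : R :=
  sum_n_m (fun l => sum_n_m (fun k => Rpower (INR k * INR l) (-sg) * hh k l s) 1 l) 1 n.
Definition Dsum (p : R) (n : nat) := sum_n_m (fun k => exp ((-p-1) * ln (INR k))) 1 n.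

Lemma fF0 sg s x : fF sg s 0 x = exp (-sg * ln x) * cos (s * ln x).
Proof. unfold fF. rewrite Rminus_0_r. auto. Qed.
Lemma fF1 sg s x : fF sg s (PI/2) x = exp (-sg * ln x) * sin (s * ln x).
Proof. unfold fF. rewrite cos_minus, cos_PI2, sin_PI2. ring. Qed.

Lemma INRpos k : (1 <= k)%nat -> 0 < INR k.
Proof. intros. apply lt_0_INR. lia. Qed.

Lemma inner sg s l : (1 <= l)%nat ->
  sum_n_m (fun k => Rpower (INR k * INR l) (-sg) * hh k l s) 1 l =
  fF sg s 0 (INR l) * CF sg s 0 (pred l) + fF sg s (PI/2) (INR l) * CF sg s (PI/2) (pred l).
Proof.
intros Hl. destruct l as [|l]; [lia|]. simpl pred.
rewrite sum_n_Sm by lia. unfold hh at 2. rewrite Nat.ltb_irrefl.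
unfold plus; cbn -[INR sum_n_m]. rewrite Rmult_0_r, Rplus_0_r.
unfold CF.
transitivity (sum_n_m (fun k => plus (mult (fF sg s 0 (INR (S l))) (fF sg s 0 (INR k)))
   (mult (fF sg s (PI/2) (INR (S l))) (fF sg s (PI/2) (INR k)))) 1 l).
2:{ rewrite sum_n_m_plus, !sum_n_m_mult_l. reflexivity. }
apply sum_n_m_ext_loc. intros k Hk.
unfold hh. replace (Nat.ltb k (S l)) with true by (symmetry; apply Nat.ltb_lt; lia).
assert (0 < INR k) by (apply INRpos; lia).
assert (HL : 0 < INR (S l)) by (apply INRpos; lia).
remember (INR (S l)) as L. clear HeqL.
unfold plus, mult; simpl. rewrite !fF0, !fF1.
unfold Rpower. rewrite ln_mult by auto. rewrite ln_div by auto.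
replace (-sg * (ln (INR k) + ln L)) with (-sg * ln (INR k) + -sg * ln L) by ring.
rewrite exp_plus. replace (s * (ln (INR k) - ln L)) with (s * ln (INR k) - s * ln L) by ring.
rewrite cos_minus. ring.
Qed.

Lemma Tid sg s n :
  2 * Tn n sg s = (CF sg s 0 n)^2 + (CF sg s (PI/2) n)^2 - Dsum (2*sg-1) n.
Proof.
induction n.
- unfold Tn, CF, Dsum. rewrite !sum_n_m_zero by lia. unfold zero; simpl. ring.
- assert (E1 : Tn (S n) sg s = Tn n sg s + (fF sg s 0 (INR (S n)) * CF sg s 0 n + fF sg s (PI/2) (INR (S n)) * CF sg s (PI/2) n)).
  { unfold Tn. rewrite sum_n_Sm by lia. rewrite inner by lia. reflexivity. }
  assert (E2 : forall ph, CF sg s ph (S n) = CF sg s ph n + fF sg s ph (INR (S n))).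
  { intros. unfold CF. rewrite sum_n_Sm by lia. reflexivity. }
  assert (E3 : Dsum (2*sg-1) (S n) = Dsum (2*sg-1) n + exp ((- (2 * sg - 1) - 1) * ln (INR (S n)))).
  { unfold Dsum. rewrite sum_n_Sm by lia. reflexivity. }
  rewrite E1, E2, E2, E3.
  rewrite Rmult_plus_distr_l, IHn. rewrite fF0, fF1.
  set (e := exp (- sg * ln (INR (S n)))).
  assert (He : exp ((- (2 * sg - 1) - 1) * ln (INR (S n))) = e * e).
  { unfold e. rewrite <- exp_plus. f_equal. ring. }
  rewrite He. pose proof (sin2_cos2 (s * ln (INR (S n)))). unfold Rsqr in H.
  set (c := cos (s * ln (INR (S n)))) in *. set (si := sin (s * ln (INR (S n)))) in *.
  replace (e*e) with (e*e*(si*si + c*c)) by (rewrite H; ring).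
  ring.
Qed.

Lemma Dbnd p n : 0 < p -> (1 <= n)%nat ->
  0 <= Dsum p n <= 1 + 1/p.
Proof.
intros Hp Hn. unfold Dsum.
assert (Hinv : forall m, sum_n_m (fun k => exp ((-p-1) * ln (INR k))) 1 (S m) + exp (-p * ln (INR (S m))) / p <= 1 + 1/p).
{ induction m.
  - rewrite sum_n_n. simpl INR. rewrite ln_1, !Rmult_0_r, exp_0. lra.
  - rewrite sum_n_Sm by lia. unfold plus; cbn -[INR sum_n_m].
    pose proof (tele p (INR (S (S m))) Hp).
    replace (INR (S (S m)) - 1) with (INR (S m)) in H by (rewrite (S_INR (S m)); ring).
    assert (1 < INR (S (S m))) by (rewrite !S_INR; pose proof (pos_INR m); lra).
    specialize (H H0). unfold Rdiv in *. lra. }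
destruct n as [|m]; [lia|]. specialize (Hinv m).
assert (0 <= exp (- p * ln (INR (S m))) / p).
{ unfold Rdiv. apply Rmult_le_pos. left; apply exp_pos. left; apply Rinv_0_lt_compat; lra. }
split; [|lra].
assert (Z0 : sum_n_m (fun _ => 0) 1 (S m) = 0) by (rewrite sum_n_m_const, Rmult_0_r; reflexivity).
rewrite <- Z0. apply sum_n_m_le. intros. left; apply exp_pos.
Qed.

Lemma abs_split u U : Rabs u <= U -> -U <= u <= U.
Proof. unfold Rabs; destruct Rcase_abs; intros; lra. Qed.

Lemma abs_prod u v U V : Rabs u <= U -> Rabs v <= V -> Rabs (u*v) <= U*V.
Proof. intros. rewrite Rabs_mult. apply Rmult_le_compat; auto using Rabs_pos. Qed.

Lemma PP sg s x : sg < 1 ->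
  (PF sg s 0 x)^2 + (PF sg s (PI/2) x)^2 = exp (2*(1-sg) * ln x) / ((1-sg)^2 + s^2).
Proof.
intros Hs. unfold PF. rewrite Rminus_0_r.
rewrite cos_minus, sin_minus, cos_PI2, sin_PI2.
replace (2*(1-sg) * ln x) with ((1-sg)*ln x + (1-sg)*ln x) by ring. rewrite exp_plus.
pose proof (sin2_cos2 (s * ln x)). unfold Rsqr in H.
assert (0 < (1-sg)^2 + s^2) by nra.
set (c := cos (s * ln x)) in *. set (si := sin (s * ln x)) in *.
field_simplify; try lra.
replace (c^2) with (1 - si^2) by nra. field. nra.
Qed.

Lemma Tbnd sg s n : 1/2 < sg < 1 -> 0 <= s <= 1 -> (1 <= n)%nat ->
  let K2 := 1 + (2-sg)/(1-sg)^2 + 2 + 2/sg in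
  let B := (2-sg)/(1-sg)^2 in
  let K3 := 1 + 1/(2*sg-1) in
  Rabs (2 * Tn n sg s - exp (2*(1-sg) * ln (INR n)) / ((1-sg)^2 + s^2))
   <= (4*B*K2 + 2*K2*K2 + K3) * exp ((1-sg) * ln (INR n)).
Proof.
intros Hs Hs' Hn K2 B K3.
assert (Hs0 : 0 < sg < 1) by lra.
rewrite Tid. rewrite <- PP by lra.
pose proof (EFbnd sg s 0 n Hs0 Hs' Hn) as E0.
pose proof (EFbnd sg s (PI/2) n Hs0 Hs' Hn) as E1.
pose proof (Pbnd sg s 0 (INR n) Hs0 Hs') as P0.
pose proof (Pbnd sg s (PI/2) (INR n) Hs0 Hs') as P1.
pose proof (Dbnd (2*sg-1) n ltac:(lra) Hn) as D.
fold K2 B in E0, E1, P0, P1. fold K3 in D.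
unfold EF in E0, E1.
set (Y := exp ((1-sg) * ln (INR n))) in *.
assert (HY : 1 <= Y).
{ unfold Y. apply Rle_trans with (exp 0); [rewrite exp_0; lra|]. apply exp_le'.
  assert (0 <= ln (INR n)). { rewrite <- ln_1. apply ln_le. lra. apply (le_INR 1); auto. }
  nra. }
set (C0 := CF sg s 0 n) in *. set (C1 := CF sg s (PI/2) n) in *.
set (Q0 := PF sg s 0 (INR n)) in *. set (Q1 := PF sg s (PI/2) (INR n)) in *.
set (e0 := C0 - Q0) in *. set (e1 := C1 - Q1) in *.
replace (C0^2 + C1^2 - Dsum (2*sg-1) n - (Q0^2 + Q1^2)) with
  (2*(Q0*e0) + e0*e0 + 2*(Q1*e1) + e1*e1 - Dsum (2*sg-1) n) by (unfold e0, e1; ring).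
assert (HK2 : 0 <= K2). { pose proof (Rabs_pos e0). lra. }
assert (HB : 0 <= B). { pose proof (Rabs_pos Q0). pose proof (exp_pos ((1-sg)*ln (INR n))). fold Y in H0. 
  destruct (Rle_or_lt 0 B); auto. nra. }
pose proof (abs_prod _ _ _ _ P0 E0). pose proof (abs_prod _ _ _ _ P1 E1).
pose proof (abs_prod _ _ _ _ E0 E0). pose proof (abs_prod _ _ _ _ E1 E1).
apply abs_split in H. apply abs_split in H0. apply abs_split in H1. apply abs_split in H2.
apply Rabs_le.
assert (0 <= K3 * Y - K3) by nra.
assert (0 <= K2*K2*Y - K2*K2) by nra.
split; nra.
Qed.

Lemma is_RInt_eq' (f : R -> R) a b x y : is_RInt f a b x -> x = y -> is_RInt f a b y.
Proof. intros H ->. auto. Qed.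

Lemma RInt0 : is_RInt (fun _ : R => 0) 0 1 0.
Proof. eapply is_RInt_eq'. apply (is_RInt_const 0 1 (0:R)). 
  unfold scal; simpl. unfold mult; simpl. ring. Qed.

Lemma RInt_sum (f : nat -> R -> R) (v : nat -> R) m n :
  (forall i, (m <= i <= n)%nat -> is_RInt (f i) 0 1 (v i)) ->
  is_RInt (fun s => sum_n_m (fun i => f i s) m n) 0 1 (sum_n_m v m n).
Proof.
induction n; intros H.
- destruct m.
  + rewrite sum_n_n. eapply is_RInt_ext; [|apply (H 0%nat); lia].
    intros; rewrite sum_n_n; auto.
  + rewrite sum_n_m_zero by lia. eapply is_RInt_ext; [|apply RInt0].
    intros; rewrite sum_n_m_zero by lia. reflexivity.
- destruct (le_lt_dec m (S n)).
  + rewrite sum_n_Sm by lia.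
    eapply is_RInt_ext; [| apply (@is_RInt_plus R_NormedModule); [apply IHn|apply H]].
    * intros; rewrite sum_n_Sm by lia. reflexivity.
    * intros; apply H; lia.
    * lia.
  + rewrite sum_n_m_zero by lia. eapply is_RInt_ext; [|apply RInt0].
    intros; rewrite sum_n_m_zero by lia. reflexivity.
Qed.

Lemma RInt_cos L : L <> 0 -> is_RInt (fun s => cos (s * L)) 0 1 (sin L / L).
Proof.
intros HL.
eapply is_RInt_eq'.
apply (@is_RInt_derive R_CompleteNormedModule (fun s => sin (s * L) / L) (fun s => cos (s * L))).
- intros. auto_derive; auto. field. auto.
- intros. apply (@ex_derive_continuous R_AbsRing R_NormedModule). auto_derive. auto.
- unfold minus, plus, opp; simpl. rewrite Rmult_0_l, sin_0, Rmult_1_l. field. auto.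
Qed.

Lemma term_int sg k l : (1 <= k <= l)%nat ->
  is_RInt (fun s => Rpower (INR k * INR l) (-sg) * hh k l s) 0 1
     (Rpower (INR k * INR l) (-sg) * g (INR k / INR l)).
Proof.
intros Hk.
assert (H0 : 0 < INR k) by (apply INRpos; lia).
assert (H1 : 0 < INR l) by (apply INRpos; lia).
unfold hh, g. destruct (Nat.ltb k l) eqn:E.
- apply Nat.ltb_lt in E. apply lt_INR in E.
  assert (0 < INR k / INR l < 1).
  { split. apply Rdiv_lt_0_compat; auto. apply Rmult_lt_reg_r with (INR l); auto.
    unfold Rdiv. rewrite Rmult_assoc, Rinv_l by lra. lra. }
  destruct (Rlt_dec 0 (INR k / INR l)); [|lra].
  destruct (Rlt_dec (INR k / INR l) 1); [|lra].
  assert (ln (INR k / INR l) < 0) by (rewrite <- ln_1; apply ln_increasing; lra).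
  eapply is_RInt_ext; [|apply (@is_RInt_scal R_NormedModule (fun s => cos (s * ln (INR k / INR l))) 0 1 (Rpower (INR k * INR l) (- sg))), RInt_cos; lra].
  intros. reflexivity.
- apply Nat.ltb_ge in E. assert (k = l) by lia. subst.
  unfold Rdiv. rewrite Rinv_r by lra.
  destruct (Rlt_dec 0 1); [|lra]. destruct (Rlt_dec 1 1); [lra|].
  eapply is_RInt_ext; [|eapply is_RInt_eq'; [apply RInt0|]].
  intros; now rewrite Rmult_0_r. now rewrite Rmult_0_r.
Qed.

Lemma intT n sg : is_RInt (fun s => Tn n sg s) 0 1 (S_sum n sg g).
Proof.
unfold Tn, S_sum. apply RInt_sum. intros l Hl.
apply RInt_sum. intros k Hk. apply term_int. lia.
Qed.

Lemma RInt_atan a : 0 < a ->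
  is_RInt (fun s => / (a^2 + s^2)) 0 1 (atan (1/a) / a).
Proof.
intros Ha.
eapply is_RInt_eq'.
apply (@is_RInt_derive R_CompleteNormedModule (fun s => atan (s / a) / a)).
- intros x _.
  assert (D1 : is_derive (fun s => atan (s / a)) x (scal (/a) (/(1 + (x/a)^2)))).
  { apply (@is_derive_comp R_AbsRing R_NormedModule atan (fun s => s / a)).
    apply is_derive_Reals, derivable_pt_lim_atan.
    auto_derive; auto. field. lra. }
  apply (is_derive_scal _ _ (/a)) in D1.
  replace (/ (a^2 + x^2)) with (/a * scal (/a) (/(1 + (x/a)^2))).
  eapply (@is_derive_ext R_AbsRing R_NormedModule); [|exact D1].
  intros. simpl. unfold Rdiv. ring.
  unfold scal; simpl; unfold mult; simpl. field. split; [nra|lra].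
- intros. apply (@ex_derive_continuous R_AbsRing R_NormedModule). auto_derive. nra.
- unfold minus, plus, opp; simpl. unfold Rdiv. rewrite Rmult_0_l, atan_0. ring.
Qed.

Lemma lim_pow C b : 0 < b -> is_lim_seq (fun n => C / Rpower (INR n) b) 0.
Proof.
intros Hb.
assert (H1 : is_lim_seq (fun n => ln (INR n)) p_infty).
{ apply (is_lim_comp_seq ln INR p_infty p_infty is_lim_ln_p).
  exists 0%nat. intros. discriminate. apply is_lim_seq_INR. }
apply (is_lim_seq_scal_l _ b) in H1.
assert (H2 : is_lim_seq (fun n => exp (b * ln (INR n))) p_infty).
{ apply (is_lim_comp_seq exp _ p_infty p_infty is_lim_exp_p).
  exists 0%nat. intros. discriminate.
  replace p_infty with (Rbar_mult b p_infty). auto.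
  simpl. destruct (Rle_dec 0 b); [|lra]. destruct (Rle_lt_or_eq_dec 0 b r); [auto|lra]. }
apply is_lim_seq_inv in H2; [|discriminate].
apply (is_lim_seq_scal_l _ C) in H2. simpl in H2. rewrite Rmult_0_r in H2.
eapply is_lim_seq_ext; [|exact H2]. intros. unfold Rpower. unfold Rdiv. reflexivity.
Qed.

Lemma mainbound sg n : 1/2 < sg < 1 -> (1 <= n)%nat ->
  let K2 := 1 + (2-sg)/(1-sg)^2 + 2 + 2/sg in
  let B := (2-sg)/(1-sg)^2 in
  let K3 := 1 + 1/(2*sg-1) in
  Rabs (S_sum n sg g - exp (2*(1-sg) * ln (INR n)) / 2 * (atan (1/(1-sg)) / (1-sg)))
   <= (4*B*K2 + 2*K2*K2 + K3) * exp ((1-sg) * ln (INR n)) / 2.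
Proof.
intros Hs Hn K2 B K3.
set (M := exp (2*(1-sg) * ln (INR n))).
set (K := (4*B*K2 + 2*K2*K2 + K3) * exp ((1-sg) * ln (INR n))).
assert (IT := intT n sg).
assert (IA := RInt_atan (1-sg) ltac:(lra)).
apply (@is_RInt_scal R_NormedModule _ _ _ (M/2)) in IA.
assert (I := @is_RInt_minus R_NormedModule _ _ _ _ _ _ IT IA).
assert (HR := is_RInt_unique _ _ _ _ I).
assert (Hle := abs_RInt_le_const _ 0 1 (K/2) ltac:(lra) (ex_intro _ _ I)).
cbv beta in Hle, HR. rewrite HR in Hle. unfold minus, plus, opp, scal in Hle; simpl in Hle. unfold mult in Hle; simpl in Hle.
replace (S_sum n sg g - M / 2 * (atan (1 / (1 - sg)) / (1 - sg))) with
  (S_sum n sg g + - (M / 2 * (atan (1 / (1 - sg)) / (1 - sg)))) by ring.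
replace (K/2) with ((1-0) * (K/2)) by ring. apply Hle.
intros t Ht. change (Rabs (Tn n sg t + - (M / 2 * / ((1 - sg) ^ 2 + t ^ 2))) <= K/2).
assert (Hb := Tbnd sg t n Hs ltac:(lra) Hn). fold K2 B K3 M K in Hb.
replace (Tn n sg t + - (M / 2 * / ((1 - sg) ^ 2 + t ^ 2))) with
  ((2 * Tn n sg t - M / ((1 - sg) ^ 2 + t ^ 2)) / 2) by (field; nra).
unfold Rdiv at 1. rewrite Rabs_mult. rewrite (Rabs_right (/2)) by lra. cbv zeta in Hb. fold K in Hb. lra.
Qed.

Theorem theorem5p4 (sigma : R) (Hs1 : 1/2 < sigma) (Hs2 : sigma < 1) :
  is_lim_seq (fun n : nat => S_sum n sigma g / Rpower (INR n) (2 * (1 - sigma)))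
    (1 / (2 * (1 - sigma)) * atan (1 / (1 - sigma)))
  /\
  exists C : R, exists N : nat, forall n : nat, (N <= n)%nat ->
    Rabs (S_sum n sigma g / Rpower (INR n) (2 * (1 - sigma))
          - 1 / (2 * (1 - sigma)) * atan (1 / (1 - sigma)))
    <= C / Rpower (INR n) (2 * (1 - sigma) / 3).
Proof.
set (K2 := 1 + (2-sigma)/(1-sigma)^2 + 2 + 2/sigma).
set (B := (2-sigma)/(1-sigma)^2).
set (K3 := 1 + 1/(2*sigma-1)).
set (K4 := 4*B*K2 + 2*K2*K2 + K3).
set (L := 1 / (2 * (1 - sigma)) * atan (1 / (1 - sigma))).
assert (HB : 0 < B) by (unfold B; apply Rdiv_lt_0_compat; nra).
assert (HK2 : 0 < K2).
{ unfold K2. fold B. assert (0 < 2/sigma) by (apply Rdiv_lt_0_compat; lra). lra. }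
assert (HK3 : 0 < K3).
{ unfold K3. assert (0 < 1/(2*sigma-1)) by (apply Rdiv_lt_0_compat; lra). lra. }
assert (HK4 : 0 < K4) by (unfold K4; nra).
assert (Hbd : forall n, (1 <= n)%nat ->
  Rabs (S_sum n sigma g / Rpower (INR n) (2 * (1 - sigma)) - L)
   <= (K4/2) / Rpower (INR n) (2 * (1 - sigma) / 3)).
{ intros n Hn.
  pose proof (mainbound sigma n ltac:(lra) Hn) as Hm. cbv zeta in Hm. fold K2 B K3 in Hm. fold K4 in Hm.
  unfold Rpower.
  set (Y := exp ((1 - sigma) * ln (INR n))) in *.
  set (M := exp (2 * (1 - sigma) * ln (INR n))) in *.
  set (Z := exp (2 * (1 - sigma) / 3 * ln (INR n))).
  assert (HM : M = Y * Y) by (unfold M, Y; rewrite <- exp_plus; f_equal; ring).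
  assert (HY : 0 < Y) by apply exp_pos.
  assert (HZ : 0 < Z) by apply exp_pos.
  assert (HZY : Z <= Y).
  { unfold Z, Y. apply exp_le'.
    assert (0 <= ln (INR n)). { rewrite <- ln_1. apply ln_le. lra. apply (le_INR 1); auto. }
    nra. }
  replace (S_sum n sigma g / M - L) with
    ((S_sum n sigma g - M / 2 * (atan (1 / (1 - sigma)) / (1 - sigma))) / M)
    by (unfold L; rewrite HM; field; split; lra).
  unfold Rdiv at 1. rewrite Rabs_mult. rewrite (Rabs_right (/M)) by (left; apply Rinv_0_lt_compat; rewrite HM; nra).
  apply Rle_trans with (K4 * Y / 2 * / M).
  { apply Rmult_le_compat_r; [left; apply Rinv_0_lt_compat; rewrite HM; nra|exact Hm]. }
  rewrite HM. apply Rle_trans with (K4 / 2 / Y).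
  { right. field. lra. }
  unfold Rdiv. apply Rmult_le_compat_l; [lra|]. apply Rinv_le_contravar; lra. }
split.
- assert (Hv : is_lim_seq (fun n => S_sum n sigma g / Rpower (INR n) (2 * (1 - sigma)) - L) 0).
  { apply is_lim_seq_abs_0.
    apply (is_lim_seq_le_le_loc (fun _ => 0) _ (fun n => (K4/2) / Rpower (INR n) (2 * (1 - sigma) / 3))).
    + exists 1%nat. intros n Hn. split; [apply Rabs_pos|]. apply Hbd; auto.
    + apply is_lim_seq_const.
    + apply lim_pow. lra. }
  assert (H := is_lim_seq_plus' _ _ 0 L Hv (is_lim_seq_const L)). rewrite Rplus_0_l in H.
  eapply is_lim_seq_ext; [|exact H]. intros; simpl; ring.
- exists (K4/2), 1%nat. intros n Hn. apply Hbd; auto.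
Qed.
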